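(* Let $G$ be a $k\times l$ generator matrix of an $A$-code $C$, and suppose that for each $i$ the $i$-th row $g^{(i)}$ of $G$ is monic. Then $(g^{(1)},\ldots,g^{(k)})$ is a basis of divisors of $C$ if and only if the following three conditions hold: (i) $G$ is in echelon form, i.e. $L_{\mathrm{ind}}(g^{(1)})<L_{\mathrm{ind}}(g^{(2)})<\cdots<L_{\mathrm{ind}}(g^{(k)})$; (ii) $L_{\mathrm{coef}}(g^{(i)})$ divides $f(x)$ in $\mathbb{F}[x]$ for every $i$; (iii) for every $i$, $h_i g^{(i)}$ is an $A$-linear combination of $g^{(i+1)},\ldots,g^{(k)}$, where $h_i(x)=f(x)/L_{\mathrm{coef}}(g^{(i)})$. Moreover, the equivalence remains true if condition (iii) is replaced by (iii$'$) $\dim_{\mathbb{F}} C=\sum_{i=1}^k \bigl(m-\deg L_{\mathrm{coef}}(g^{(i)})\bigr)$.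
   Context: Let $\mathbb{F}$ be a finite field, $f(x)\in\mathbb{F}[x]$ a monic polynomial of degree $m$, and $A=\mathbb{F}[x]/\langle f(x)\rangle$; elements of $A$ are identified with polynomials of degree $<m$, arithmetic done modulo $f$. An $A$-code of length $l$ is an $A$-submodule of $A^l$; it is in particular an $\mathbb{F}$-subspace of $A^l\cong\mathbb{F}^{lm}$, whence $\dim_{\mathbb{F}}$. A generator matrix of an $A$-code is a matrix over $A$ whose rows generate it as an $A$-module. For $u=(u_1,\ldots,u_l)\in A^l$, the leading index $L_{\mathrm{ind}}(u)$ is the smallest $i$ with $u_i\neq 0$ ($L_{\mathrm{ind}}(0)=\infty$) and the leading coefficient is $L_{\mathrm{coef}}(u)=u_{L_{\mathrm{ind}}(u)}$; $u$ is monic if $L_{\mathrm{coef}}(u)$ is a monic polynomial. For a nonzero $A$-code $C$, $L_{\mathrm{ind}}(C)=\min\{L_{\mathrm{ind}}(u):u\in C\}$, and $L_{\mathrm{coef}}(C)$ is the monic polynomial $g$ of minimum degree such that some $c\in C$ has $L_{\mathrm{ind}}(c)=L_{\mathrm{ind}}(C)$ and $L_{\mathrm{coef}}(c)=g$; any such $c$ is a leading element of $C$. Set $C^{(1)}=C$ and, while $C^{(n)}\ne 0$, $C^{(n+1)}=\{c\in C^{(n)}: L_{\mathrm{ind}}(c)>L_{\mathrm{ind}}(C^{(n)})\}$; let $k$ be the largest integer with $C^{(k)}\neq 0$. A tuple $(g^{(1)},\ldots,g^{(k)})$ with $g^{(j)}$ a leading element of $C^{(j)}$ for each $j$ is called a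 basis of divisors of $C$. *)

(* Defs.v *)
From HB Require Import structures.
From mathcomp Require Import all_boot all_order all_algebra.
Set Implicit Arguments. Unset Strict Implicit. Unset Printing Implicit Defensive.
Import GRing.Theory.
Local Open Scope ring_scope.

(* Elements of A = F[x]/<f> are polynomials of size < size f (degree < m,
   where m = (size f).-1 = deg f); vectors of A^l are row vectors
   'rV[{poly F}]_l whose entries are all reduced. *)

Section Codes.
Variable F : finFieldType.
Variable l : nat.

Definition vec := 'rV[{poly F}]_l.

Definition reduced (f : {poly F}) (u : vec) : Prop :=
  forall j : 'I_l, (size (u ord0 j) < size f)%N.

Definition modrow (f : {poly F}) (u : vec) : vec := map_mx (fun p => p %% f) u.

Definition isACode (f : {poly F}) (C : vec -> Prop) : Prop :=
  [/\ forall u, C u -> reduced f u,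
      C 0,
      forall u v, C u -> C v -> C (u + v)
    & forall (a : {poly F}) u, (size a < size f)%N -> C u -> C (modrow f (a *: u))].

Definition isGenMatrix (f : {poly F}) (k : nat) (G : 'M[{poly F}]_(k, l))
  (C : vec -> Prop) : Prop :=
  (forall i : 'I_k, reduced f (row i G)) /\
  (forall u, C u <-> exists a : 'I_k -> {poly F},
       (forall i, (size (a i) < size f)%N) /\
       u = modrow f (\sum_(i < k) a i *: row i G)).

(* leading index (0-based); the value l plays the role of infinity *)
Definition lind (u : vec) : nat := find (fun j : 'I_l => u ord0 j != 0) (enum 'I_l).

(* leading coefficient (0 for the zero vector) *)
Definition lcoef (u : vec) : {poly F} :=
  nth 0 [seq u ord0 j | j <- enum 'I_l] (lind u).

Definition monicv (u : vec) : Prop := lcoef u \is monic.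

Definition leadingElement (C : vec -> Prop) (c : vec) : Prop :=
  [/\ C c,
      forall u, C u -> (lind c <= lind u)%N,
      lcoef c \is monic
    & forall u, C u -> lind u = lind c -> lcoef u \is monic ->
        (size (lcoef c) <= size (lcoef u))%N].

(* chain C n = C^{(n+1)} :  C^{(1)} = C,
   C^{(n+1)} = { c in C^{(n)} | L_ind(c) > L_ind(C^{(n)}) } *)
Fixpoint chain (C : vec -> Prop) (n : nat) : vec -> Prop :=
  match n with
  | 0 => C
  | n'.+1 => fun c => chain C n' c /\ exists d, chain C n' d /\ d != 0 /\ (lind d < lind c)%N
  end.

(* (g 0, ..., g (k-1)) is a basis of divisors of C: g j is a leading element
   of C^{(j+1)}, and k is the largest integer with C^{(k)} <> 0, i.e.
   C^{(k+1)} = 0. *)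
Definition basisOfDivisors (C : vec -> Prop) (k : nat) (g : 'I_k -> vec) : Prop :=
  (forall j : 'I_k, leadingElement (chain C j) (g j)) /\
  (forall c, chain C k c -> c = 0).

Definition dimF (C : vec -> Prop) (n : nat) : Prop :=
  exists s : 'I_n -> vec,
    [/\ forall i, C (s i),
        forall c : 'I_n -> F, \sum_(i < n) (c i)%:P *: s i = 0 -> forall i, c i = 0
      & forall u, C u -> exists c : 'I_n -> F, u = \sum_(i < n) (c i)%:P *: s i].

End Codes.

(* Main.v *)
Require Import Defs.
From HB Require Import structures.
From mathcomp Require Import all_boot all_order all_algebra ring zify.
Set Implicit Arguments. Unset Strict Implicit. Unset Printing Implicit Defensive.
Import GRing.Theory.
Local Open Scope ring_scope.

Section Aux.
Variable F : finFieldType.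
Variable l : nat.
Implicit Types (u v : vec F l) (f a : {poly F}).

Lemma lind_le u : (lind u <= l)%N.
Proof. by have := find_size (fun j : 'I_l => u ord0 j != 0) (enum 'I_l); rewrite size_enum_ord. Qed.

Lemma lind_geP u (p : nat) : (p <= l)%N ->
  (p <= lind u)%N <-> (forall j : 'I_l, (j < p)%N -> u ord0 j = 0).
Proof.
move=> pl; split.
- move=> H j jp.
  have := before_find j (leq_trans jp H).
  by rewrite nth_ord_enum => /negbFE/eqP.
- move=> H; rewrite leqNgt; apply/negP => lt.
  have hl : (lind u < l)%N by apply: leq_trans lt pl.
  have hs : has (fun j : 'I_l => u ord0 j != 0) (enum 'I_l).
    by rewrite has_find size_enum_ord.
  have := nth_find (Ordinal hl) hs.
  rewrite -/(lind u).
  have -> : nth (Ordinal hl) (enum 'I_l) (lind u) = Ordinal hl.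
    by apply: val_inj; rewrite /= nth_enum_ord.
  by rewrite (H (Ordinal hl) lt) eqxx.
Qed.

Lemma lcoefE u (j : 'I_l) : lind u = j -> lcoef u = u ord0 j.
Proof.
move=> e; rewrite /lcoef e (nth_map j) ?size_enum_ord //.
by rewrite nth_ord_enum.
Qed.

Lemma lind_eq u (j : 'I_l) : (forall t : 'I_l, (t < j)%N -> u ord0 t = 0) ->
  u ord0 j != 0 -> lind u = j /\ lcoef u = u ord0 j.
Proof.
move=> H nz.
have e : lind u = j.
  apply/eqP; rewrite eqn_leq; apply/andP; split.
  - rewrite leqNgt; apply/negP => lt.
    have := (proj1 (lind_geP u (ltn_ord j)) lt j (leqnn _)).
    by move/eqP; rewrite (negPf nz).
  - by apply/(lind_geP u (ltnW (ltn_ord j))).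
by split=> //; apply: lcoefE.
Qed.

Lemma lind0 : lind (0 : vec F l) = l.
Proof.
apply/eqP; rewrite eqn_leq lind_le /=.
by apply/(lind_geP _ (leqnn l)) => j _; rewrite mxE.
Qed.

Lemma lcoef0 : lcoef (0 : vec F l) = 0.
Proof. by rewrite /lcoef lind0 nth_default // size_map size_enum_ord. Qed.

Lemma lind_nz u : u != 0 -> exists j : 'I_l,
  [/\ lind u = j, lcoef u = u ord0 j, u ord0 j != 0 &
      forall t : 'I_l, (t < j)%N -> u ord0 t = 0].
Proof.
move=> nz.
have hl : (lind u < l)%N.
  rewrite ltn_neqAle lind_le andbT; apply/negP => /eqP e.
  move/negP: nz; apply; apply/eqP/matrixP => i j.
  rewrite (ord1 i) mxE; apply: (proj1 (lind_geP u (leqnn l))) => //.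
  by rewrite e.
exists (Ordinal hl); split => //.
- exact: lcoefE.
- have hs : has (fun j : 'I_l => u ord0 j != 0) (enum 'I_l).
    by rewrite has_find size_enum_ord.
  have := nth_find (Ordinal hl) hs.
  rewrite -/(lind u).
  have -> : nth (Ordinal hl) (enum 'I_l) (lind u) = Ordinal hl.
    by apply: val_inj; rewrite /= nth_enum_ord.
  by [].
- by apply/(lind_geP u (ltnW hl)).
Qed.

Lemma lcoef_nz u : lcoef u != 0 -> u != 0.
Proof. by apply: contraNneq => ->; rewrite lcoef0. Qed.

Lemma modrowE f u j : (modrow f u) ord0 j = u ord0 j %% f.
Proof. by rewrite mxE. Qed.

Lemma modrowD f u v : modrow f (u + v) = modrow f u + modrow f v.
Proof. by apply/matrixP => i j; rewrite !mxE modpD. Qed.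

Lemma modrow0 f : modrow f (0 : vec F l) = 0.
Proof. by apply/matrixP => i j; rewrite !mxE mod0p. Qed.

Lemma modrowN f u : modrow f (- u) = - modrow f u.
Proof. by apply/matrixP => i j; rewrite !mxE modpN. Qed.

Lemma modrowB f u v : modrow f (u - v) = modrow f u - modrow f v.
Proof. by rewrite modrowD modrowN. Qed.

Lemma modrow_sum f (I : finType) (P : pred I) (X : I -> vec F l) :
  modrow f (\sum_(i | P i) X i) = \sum_(i | P i) modrow f (X i).
Proof. by apply: (big_morph _ (modrowD f) (modrow0 f)). Qed.

Lemma modrowK f u : modrow f (modrow f u) = modrow f u.
Proof. by apply/matrixP => i j; rewrite !mxE modp_id. Qed.

Lemma modrowZm f a u : modrow f (a *: modrow f u) = modrow f (a *: u).
Proof. by apply/matrixP => i j; rewrite !mxE modp_mul. Qed.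

Lemma modrowmZ f a u : modrow f ((a %% f) *: u) = modrow f (a *: u).
Proof. by apply/matrixP => i j; rewrite !mxE mulrC modp_mul mulrC. Qed.

Lemma modrowC f (c : F) u : modrow f (c%:P *: u) = c%:P *: modrow f u.
Proof. by apply/matrixP => i j; rewrite !mxE !mul_polyC modpZl. Qed.

Lemma modrow_id f u : reduced f u -> modrow f u = u.
Proof. by move=> H; apply/matrixP => i j; rewrite (ord1 i) mxE modp_small. Qed.

Lemma reduced_modrow f u : f != 0 -> reduced f (modrow f u).
Proof. by move=> fn0 j; rewrite mxE ltn_modp. Qed.

Lemma lind_add u v : (minn (lind u) (lind v) <= lind (u + v)%R)%N.
Proof.
have hm : (minn (lind u) (lind v) <= l)%N by rewrite geq_min lind_le.
apply/(lind_geP _ hm) => j; rewrite leq_min => /andP[ju jv].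
by rewrite mxE (proj1 (lind_geP u (lind_le u)) (leqnn _) j ju)
  (proj1 (lind_geP v (lind_le v)) (leqnn _) j jv) addr0.
Qed.

Lemma lind_scale f a u : (lind u <= lind (modrow f (a *: u)))%N.
Proof.
apply/(lind_geP _ (lind_le u)) => j ju.
by rewrite !mxE (proj1 (lind_geP u (lind_le u)) (leqnn _) j ju) mulr0 mod0p.
Qed.

End Aux.

Section Main.
Variables (F : finFieldType) (f : {poly F}) (l k : nat) (C : vec F l -> Prop)
  (G : 'M[{poly F}]_(k, l)).
Hypotheses (fmon : f \is monic) (hC : isACode f C) (hG : isGenMatrix f G C)
  (rmon : forall i : 'I_k, monicv (row i G)).

Local Notation r i := (row i G).
Local Notation p i := (lind (row i G)).
Local Notation g i := (lcoef (row i G)).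
Implicit Type i : 'I_k.

Lemma fnz : f != 0. Proof. exact: monic_neq0. Qed.
Lemma gnz i : g i != 0. Proof. exact: monic_neq0 (rmon i). Qed.
Lemma rnz i : r i != 0. Proof. exact: lcoef_nz (gnz i). Qed.

Lemma rowinfo i : exists J : 'I_l,
  [/\ p i = J, g i = G i J & forall t : 'I_l, (t < J)%N -> G i t = 0].
Proof.
have [J [e1 e2 _ e4]] := lind_nz (rnz i).
by exists J; split => //; [rewrite e2 mxE | move=> t /e4; rewrite mxE].
Qed.

Lemma p_lt i : (p i < l)%N.
Proof. by have [J [-> _ _]] := rowinfo i. Qed.

Lemma G_before i (t : 'I_l) : (t < p i)%N -> G i t = 0.
Proof. by have [J [-> _ H]] := rowinfo i; apply: H. Qed.

Lemma G_at i (t : 'I_l) : t = p i :> nat -> G i t = g i.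
Proof.
have [J [e1 -> _]] := rowinfo i => e; congr (G i _); apply: val_inj.
by rewrite /= e e1.
Qed.

Lemma r_red i : reduced f (r i). Proof. exact: (proj1 hG). Qed.

Lemma size_g i : (size (g i) < size f)%N.
Proof. by have [J [_ -> _]] := rowinfo i; have := r_red i J; rewrite mxE. Qed.

Lemma size_g0 i : (0 < size (g i))%N.
Proof. by rewrite lt0n size_poly_eq0 gnz. Qed.

Lemma size_f2 i : (1 < size f)%N.
Proof. by have := size_g i; have := size_g0 i; lia. Qed.

Lemma size_f0 : (0 < size f)%N.
Proof. by rewrite lt0n size_poly_eq0 fnz. Qed.

Lemma size_le_mulg (b : {poly F}) i : (size b <= size (b * g i)%R)%N.
Proof.
case: (eqVneq b 0) => [->|bn]; first by rewrite mul0r.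
by rewrite size_Mmonic //; [have := size_g0 i; lia | exact: rmon].
Qed.

Lemma C_r i : C (r i).
Proof.
apply/(proj2 hG); exists (fun j => if j == i then 1 else 0); split.
  by move=> j; case: eqP => _; rewrite ?size_poly1 ?size_poly0 ?(size_f2 i) ?size_f0.
rewrite (bigD1 i) //= eqxx scale1r big1 ?addr0 ?modrow_id //; first exact: r_red.
by move=> j /negPf ->; rewrite scale0r.
Qed.

Lemma chain_sub j c : chain C j c -> C c.
Proof. by elim: j c => [//|j IH] c /= [/IH]. Qed.

Lemma chain_mono j j' c : (j <= j')%N -> chain C j' c -> chain C j c.
Proof.
elim: j' c => [|j' IH] c; first by rewrite leqn0 => /eqP ->.
rewrite leq_eqVlt => /orP[/eqP -> //|jj] /= [ch _]; exact: IH.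
Qed.

Lemma chain_add j u v : chain C j u -> chain C j v -> chain C j (u + v).
Proof.
elim: j u v => [|j IH] u v /=; first by case: hC => _ _ hadd _; apply: hadd.
move=> [cu [d1 [c1 [n1 l1]]]] [cv [d2 [c2 [n2 l2]]]]; split; first exact: IH.
have la := lind_add u v.
case: (leqP (lind d1) (lind d2)) => le.
- exists d1; split => //; split => //; apply: leq_trans la.
  by rewrite leq_min l1 (leq_ltn_trans le l2).
- exists d2; split => //; split => //; apply: leq_trans la.
  by rewrite leq_min l2 (ltn_trans le l1).
Qed.

Lemma chain_scale j (a : {poly F}) u : (size a < size f)%N -> chain C j u ->
  chain C j (modrow f (a *: u)).
Proof.
move=> sa; elim: j u => [|j IH] u /=; first by case: hC => _ _ _ hs; apply: hs.
move=> [cu [d [cd [nd ld]]]]; split; first exact: IH.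
by exists d; split => //; split => //; apply: leq_trans ld (lind_scale _ _ _).
Qed.

Section CondI.
Hypothesis hI : forall i j : 'I_k, (i < j)%N -> (p i < p j)%N.

Lemma p_le i (j : 'I_k) : (i <= j)%N -> (p i <= p j)%N.
Proof.
rewrite leq_eqVlt => /orP[/eqP e|lt]; last exact/ltnW/hI.
by have -> : i = j by apply: val_inj.
Qed.

Lemma struct_lem (b : 'I_k -> {poly F}) (j : 'I_k) :
  (forall i, (size (b i * g i)%R < size f)%N) ->
  (forall i : 'I_k, (i < j)%N -> b i = 0) ->
  (forall t : 'I_l, (t < p j)%N -> (modrow f (\sum_i b i *: r i)) ord0 t = 0) /\
  (forall t : 'I_l, t = p j :> nat -> (modrow f (\sum_i b i *: r i)) ord0 t = b j * g j).
Proof.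
move=> hb hz; split => t ht; rewrite !mxE summxE.
- rewrite big1 ?mod0p // => i _; rewrite !mxE.
  case: (ltnP i j) => ij; first by rewrite hz // mul0r.
  by rewrite G_before ?mulr0 // (leq_trans ht) // p_le.
- rewrite (bigD1 j) //= big1 ?addr0.
  + by rewrite !mxE G_at // modp_small.
  + move=> i ne; rewrite !mxE; case: (ltngtP i j) => ij.
    * by rewrite hz // mul0r.
    * by rewrite G_before ?mulr0 // ht; apply: hI.
    * by move/val_inj: ij ne => ->; rewrite eqxx.
Qed.

Definition Prep (j : nat) c := exists b : 'I_k -> {poly F},
  [/\ forall i, (size (b i * g i)%R < size f)%N,
      forall i : 'I_k, (i < j)%N -> b i = 0
    & c = modrow f (\sum_i b i *: r i)].

Definition REP := forall c, C c -> Prep 0 c.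

Lemma Prep_r (j : 'I_k) : Prep j (r j).
Proof.
exists (fun i => if i == j then 1 else 0); split.
- by move=> i; case: eqP => _; rewrite ?mul1r ?mul0r ?size_g ?size_poly0 ?size_f0.
- by move=> i ij; case: eqP ij => // ->; rewrite ltnn.
- rewrite (bigD1 j) //= eqxx scale1r big1 ?addr0 ?modrow_id //; first exact: r_red.
  by move=> i /negPf ->; rewrite scale0r.
Qed.

Lemma chainA (rep : REP) j : (j <= k)%N -> forall c, chain C j c <-> Prep j c.
Proof.
elim: j => [_ c|j IH jk c] /=.
  split; first exact: rep.
  case=> b [hb _ ->]; apply/(proj2 hG); exists b; split => // i.
  exact: leq_ltn_trans (size_le_mulg _ _) (hb i).
have jk' := ltnW jk; pose J : 'I_k := Ordinal jk.
have hPl : (p J < l)%N := p_lt J.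
split.
- move=> [ch [d [chd [dnz ltd]]]].
  have [b [hb hz ec]] := (IH jk' c).1 ch.
  have [b' [hb' hz' ed]] := (IH jk' d).1 chd.
  have pd : (p J <= lind d)%N.
    apply/(lind_geP d (ltnW hPl)) => t ht; rewrite ed.
    exact: (struct_lem (j:=J) hb' hz').1.
  have bJ : b J = 0.
    have lc : (p J < lind c)%N := leq_ltn_trans pd ltd.
    have := (struct_lem (j:=J) hb hz).2 (Ordinal hPl) erefl.
    rewrite -ec (proj1 (lind_geP c hPl) lc (Ordinal hPl) (ltnSn _)).
    by move=> /esym/eqP; rewrite mulf_eq0 (negPf (gnz J)) orbF => /eqP.
  exists b; split => // i; rewrite ltnS leq_eqVlt => /orP[/eqP e|]; last exact: hz.
  by have -> : i = J by apply: val_inj.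
- move=> [b [hb hz ec]].
  have hzj : forall i : 'I_k, (i < j)%N -> b i = 0.
    by move=> i ij; apply: hz; apply: leqW.
  split; first by apply/(IH jk' c); exists b.
  exists (r J); split; first by apply/(IH jk'); exact: (Prep_r J).
  split; first exact: rnz.
  apply/(lind_geP c hPl) => t; rewrite ltnS leq_eqVlt => /orP[/eqP e|lt]; rewrite ec.
  + by rewrite ((struct_lem (j:=J) hb hzj).2 t e) (hz J (ltnSn _)) mul0r.
  + exact: (struct_lem (j:=J) hb hzj).1.
Qed.

Lemma basis_of (rep : REP) : basisOfDivisors C (fun i => r i).
Proof.
split.
- move=> j; have jk := ltnW (ltn_ord j); split.
  + by apply/(chainA rep jk); exact: Prep_r.
  + move=> u /(chainA rep jk) [b [hb hz ->]].
    apply/(lind_geP _ (ltnW (p_lt j))) => t; exact: (struct_lem hb hz).1.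
  + exact: rmon.
  + move=> u /(chainA rep jk) [b [hb hz eu]] lu mu.
    have unz := lcoef_nz (monic_neq0 mu).
    have [J [eJ lcJ _ _]] := lind_nz unz.
    have e2 : lcoef u = b j * g j.
      rewrite lcJ; have := (struct_lem hb hz).2 J; rewrite -eu; apply.
      by rewrite -eJ lu.
    have bnz : b j != 0.
      by move: mu; rewrite e2 => /monic_neq0; rewrite mulf_eq0 negb_or => /andP[].
    rewrite e2 size_Mmonic //; last exact: rmon.
    by have := size_poly_gt0 (b j); rewrite bnz; lia.
- move=> c /(chainA rep (leqnn k)) [b [hb hz ->]].
  by rewrite big1 ?modrow0 // => i _; rewrite hz ?scale0r.
Qed.


Definition dd i := ((size f).-1 - (size (g i)).-1)%N.
Local Notation n := (\sum_(i < k) dd i)%N.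

Lemma size_bd (b : {poly F}) i : (size (b * g i)%R < size f)%N <-> (size b <= dd i)%N.
Proof.
rewrite /dd; have := size_g i; have := size_g0 i.
case: (eqVneq b 0) => [->|bn]; first by rewrite mul0r size_poly0; lia.
rewrite size_Mmonic //; last exact: rmon.
have := size_poly_gt0 b; rewrite bn; split; lia.
Qed.

Definition sD (s : 'I_n) : vec F l :=
  modrow f ('X^(@tagnat.sig2 k dd s) *: r (@tagnat.sig1 k dd s)).

Definition bpoly (y : 'I_n -> F) i : {poly F} :=
  \sum_(t < dd i) y (@tagnat.Rank k dd i t) *: 'X^t.

Lemma sum_sig (V : zmodType) (H : 'I_n -> V) :
  \sum_(s < n) H s = \sum_i \sum_(t < dd i) H (@tagnat.Rank k dd i t).
Proof.
rewrite sig_big_dep /= (reindex (@tagnat.sig k dd)) /=; last exact: tagnat.sig_bij_on.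
by apply: eq_bigr => s _; rewrite -tagnat.rankE tagnat.sigK.
Qed.

Lemma sD_sum (y : 'I_n -> F) :
  \sum_(s < n) (y s)%:P *: sD s = modrow f (\sum_i bpoly y i *: r i).
Proof.
rewrite sum_sig modrow_sum; apply: eq_bigr => i _.
rewrite /bpoly scaler_suml modrow_sum; apply: eq_bigr => t _.
rewrite /sD.
have E2 : (@tagnat.sig2 k dd (@tagnat.Rank k dd i t) : nat) = t.
  by rewrite tagnat.Rank2K.
rewrite E2 tagnat.Rank1K -modrowC scalerA mul_polyC.
by [].
Qed.

Lemma bpoly_coef (y : 'I_n -> F) i (t : 'I_(dd i)) :
  (bpoly y i)`_t = y (@tagnat.Rank k dd i t).
Proof.
rewrite /bpoly coef_sum (bigD1 t) //= coefZ coefXn eqxx mulr1 big1 ?addr0 //.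
move=> u ne; rewrite coefZ coefXn.
case: (eqVneq (t : nat) u) => [e|]; last by rewrite mulr0.
by move: ne; rewrite -val_eqE /= e eqxx.
Qed.

Lemma size_bpoly (y : 'I_n -> F) i : (size (bpoly y i) <= dd i)%N.
Proof.
rewrite /bpoly; apply: (leq_trans (size_sum _ _ _)).
apply/bigmax_leqP => t _; apply: leq_trans (size_scale_leq _ _) _.
by rewrite size_polyXn ltn_ord.
Qed.

Lemma sD_in s : C (sD s).
Proof.
rewrite /sD -modrowmZ; case: hC => _ _ _ hs; apply: hs; last exact: C_r.
by rewrite ltn_modp fnz.
Qed.

Lemma allzero (b : 'I_k -> {poly F}) :
  (forall i, (size (b i * g i)%R < size f)%N) ->
  modrow f (\sum_i b i *: r i) = 0 -> forall i, b i = 0.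
Proof.
move=> hb hz.
suff H : forall j, forall i : 'I_k, (i < j)%N -> b i = 0 by move=> i; apply: (H k).
elim=> [//|j IH] i; rewrite ltnS leq_eqVlt => /orP[/eqP e|]; last exact: IH.
have hz' : forall i' : 'I_k, (i' < i)%N -> b i' = 0 by move=> i' lt; apply: IH; rewrite -e.
have := (struct_lem hb hz').2 (Ordinal (p_lt i)) erefl.
rewrite hz mxE => /esym/eqP; rewrite mulf_eq0 (negPf (gnz i)) orbF.
by move/eqP.
Qed.

Lemma sD_indep (y : 'I_n -> F) :
  \sum_(s < n) (y s)%:P *: sD s = 0 -> forall s, y s = 0.
Proof.
rewrite sD_sum => H s.
have hb : forall i, (size (bpoly y i * g i)%R < size f)%N.
  by move=> i; apply/size_bd/size_bpoly.
have := congr1 (fun q : {poly F} => q`_(@tagnat.sig2 k dd s)) (allzero hb H (@tagnat.sig1 k dd s)).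
by rewrite bpoly_coef coef0 tagnat.sig2K.
Qed.

Lemma dim_of (rep : REP) : dimF C n.
Proof.
exists sD; split; [exact: sD_in | exact: sD_indep |].
move=> u /rep [b [hb _ ->]].
exists (fun s => (b (@tagnat.sig1 k dd s))`_(@tagnat.sig2 k dd s)).
rewrite sD_sum; congr modrow; apply: eq_bigr => i _; congr (_ *: _).
transitivity (\sum_(t < dd i) (b i)`_t *: 'X^t).
  rewrite -poly_def; apply/polyP => t; rewrite coef_poly; case: ltnP => // le.
  by rewrite nth_default // (leq_trans _ le) //; apply/size_bd.
apply: eq_bigr => t _; congr (_ *: _).
have E2 : (@tagnat.sig2 k dd (@tagnat.Rank k dd i t) : nat) = t.
  by rewrite tagnat.Rank2K.
by rewrite E2 tagnat.Rank1K.
Qed.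

Lemma rep_dim : dimF C n -> REP.
Proof.
move=> [s0 [s0C _ s0span]] c Cc.
pose phi (z : {ffun 'I_n -> F}) := \sum_(i < n) (z i)%:P *: s0 i.
pose psi (y : {ffun 'I_n -> F}) := \sum_(s < n) (y s)%:P *: sD s.
have psiC y : C (psi y).
  rewrite /psi sD_sum; apply/(proj2 hG); exists (bpoly y); split => // i.
  apply: leq_ltn_trans (size_le_mulg _ i) _; apply/size_bd/size_bpoly.
have ex y : exists z, phi z == psi y.
  have [cc e] := s0span _ (psiC y); exists (finfun cc); rewrite /phi e.
  by apply/eqP; apply: eq_bigr => i _; rewrite ffunE.
pose h y := odflt y [pick z | phi z == psi y].
have hE y : phi (h y) = psi y.
  rewrite /h; case: pickP => [z /eqP //| none].
  by have [z hz] := ex y; rewrite none in hz.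
have hinj : injective h.
  move=> y1 y2 e; have : psi y1 - psi y2 = 0 by rewrite -!hE e subrr.
  rewrite /psi -sumrB.
  under eq_bigr do rewrite -scalerBl -polyCB.
  move=> e0; have H := @sD_indep (fun s => y1 s - y2 s) e0; apply/ffunP => s.
  by apply/eqP; rewrite -subr_eq0; apply/eqP; apply: H.
have [h' hK h'K] := injF_bij hinj.
have [cc ec] := s0span c Cc.
pose z := finfun cc.
have -> : c = phi z by rewrite ec /phi; apply: eq_bigr => i _; rewrite ffunE.
rewrite -(h'K z) hE /psi sD_sum.
exists (bpoly (h' z)); split => // i.
apply/size_bd/size_bpoly.
Qed.

End CondI.

Section Rep3.
Hypothesis hII : forall i, g i %| f.
Hypothesis hIII : forall i,
      exists a : 'I_k -> {poly F},
        (forall j, (size (a j) < size f)%N) /\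
        modrow f ((f %/ g i) *: r i) =
        modrow f (\sum_(j < k | (i < j)%N) a j *: row j G).

Lemma rep3 : REP.
Proof.
move=> c Cc.
suff H : forall j, (j <= k)%N -> exists b : 'I_k -> {poly F},
    (forall i : 'I_k, (i < j)%N -> (size (b i * g i)%R < size f)%N) /\
    c = modrow f (\sum_i b i *: r i).
  have [b [hb ec]] := H k (leqnn k).
  by exists b; split => // i; apply: hb.
elim=> [_|j IH jk].
  have [a [_ ea]] := (proj1 (proj2 hG c) Cc); by exists a.
have [b [hb ec]] := IH (ltnW jk).
pose J : 'I_k := Ordinal jk.
pose h := f %/ g J.
have [a' [_ ea']] := hIII J.
pose q := b J %/ h; pose rho := b J %% h.
pose b' := fun i : 'I_k => if i == J then rho else if (J < i)%N then b i + q * a' i else b i.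
exists b'; split.
- move=> i; rewrite ltnS leq_eqVlt => /orP[/eqP e|lt].
  + have -> : i = J by apply: val_inj.
    rewrite /b' eqxx.
    have hg : h * g J = f by rewrite divpK.
    have hnz : h != 0 by apply/eqP => h0; move: fnz; rewrite -hg h0 mul0r eqxx.
    have lt : (size rho < size h)%N by rewrite ltn_modp.
    case: (eqVneq rho 0) => [->|rn]; first by rewrite mul0r size_poly0 size_f0.
    rewrite size_Mmonic //; last exact: rmon.
    rewrite -hg size_Mmonic //; last exact: rmon.
    move: lt; have := size_g0 J; rewrite /rho /h.
    move: (size (b J %% (f %/ g J))) (size (f %/ g J)) (size (g J)) => x1 x2 x3.
    lia.
  + have ne : i != J by apply/negP => /eqP e; move: lt; rewrite e /= ltnn.
    rewrite /b' (negPf ne).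
    have -> : (J < i)%N = false by apply/negbTE; rewrite -leqNgt ltnW.
    exact: hb.
- rewrite ec; apply/eqP; rewrite -subr_eq0 -modrowB -sumrB; apply/eqP.
  have -> : \sum_i (b i *: r i - b' i *: r i) =
      q *: (h *: r J - \sum_(t < k | (J < t)%N) a' t *: r t).
    rewrite scalerBr scalerA (bigD1 J) //= /b' eqxx -scalerBl.
    have -> : b J - rho = q * h by rewrite {1}(divp_eq (b J) h) addrK.
    congr (_ + _); rewrite scaler_sumr -sumrN.
    rewrite [RHS](big_mkcond (fun t : 'I_k => (J < t)%N)) [LHS]big_mkcond.
    apply: eq_bigr => t _.
    case: (eqVneq t J) => [->|ne] /=; first by rewrite ltnn.
    case: ifP => _; last by rewrite subrr.
    by rewrite scalerDl opprD addrA subrr add0r scalerA.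
  rewrite -modrowZm modrowB ea' subrr.
  by apply/matrixP => x y; rewrite !mxE mulr0 mod0p.
Qed.
End Rep3.

Section Fwd.
Hypothesis hB : basisOfDivisors C (fun i => r i).

Lemma hL (i : 'I_k) : leadingElement (chain C i) (r i).
Proof. exact: (proj1 hB). Qed.

Lemma fwdI : forall i j : 'I_k, (i < j)%N -> (p i < p j)%N.
Proof.
move=> i j ij.
have [cj _ _ _] := hL j.
have := chain_mono ij cj => /= [[_ [d [cd [nd ld]]]]].
have [_ mi _ _] := hL i.
exact: leq_ltn_trans (mi d cd) ld.
Qed.

Lemma noSmaller (J : 'I_k) (w : vec F l) (P : 'I_l) (rho : {poly F}) :
  P = p J :> nat -> chain C J w ->
  (forall t : 'I_l, (t < P)%N -> w ord0 t = 0) ->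
  w ord0 P = rho -> rho \is monic -> (size rho < size (g J))%N -> False.
Proof.
move=> eP cw bef wP mr lt.
have wnz : w ord0 P != 0 by rewrite wP monic_neq0.
have [lw lcw] := lind_eq bef wnz.
have [_ _ _ mins] := hL J.
have e1 : lind w = p J by rewrite lw eP.
have e2 : lcoef w \is monic by rewrite lcw wP.
have := mins w cw e1 e2.
by rewrite lcw wP leqNgt lt.
Qed.

Lemma monic_inv (rho : {poly F}) : rho != 0 -> (lead_coef rho)^-1 *: rho \is monic.
Proof.
by move=> rn; rewrite monicE lead_coefZ mulVf // lead_coef_eq0.
Qed.

Lemma sizeCmul (c : F) (q : {poly F}) : (size (c%:P * q)%R <= size q)%N.
Proof. by rewrite mul_polyC size_scale_leq. Qed.

Lemma fwdII i : g i %| f.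
Proof.
have [ci _ _ _] := hL i.
have [J [eJ gJ bef]] := rowinfo i.
apply/modp_eq0P/eqP/negP => rn.
pose rho := f %% g i; pose q := f %/ g i; pose gam := (lead_coef rho)^-1.
have hf : f = q * g i + rho := divp_eq f (g i).
pose a := (- (gam%:P * q)) %% f.
pose w := modrow f (a *: r i).
have cw : chain C i w by apply: chain_scale; rewrite // ltn_modp fnz.
apply: (noSmaller (J := i) (P := J) (w := w) (rho := gam%:P * rho)) => //.
- by move=> t tJ; rewrite !mxE bef // mulr0 mod0p.
- rewrite !mxE -gJ /a mulrC modp_mul.
  have -> : g i * - (gam%:P * q) = gam%:P * rho - gam%:P * f.
    by rewrite [in RHS]hf; ring.
  rewrite modpD modNp modp_mull oppr0 addr0 modp_small //.
  have s1 : (size rho < size (g i))%N by rewrite ltn_modp gnz.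
  have s2 := sizeCmul gam rho.
  have s3 := size_g i.
  move: s1 s2 s3; move: (size rho) (size (gam%:P * rho)%R) (size (g i)) => x1 x2 x3 h1 h2 h3.
  exact: leq_ltn_trans h2 (ltn_trans h1 h3).
- by rewrite mul_polyC; apply: monic_inv; apply/negP.
- by apply: leq_ltn_trans (sizeCmul _ _) _; rewrite ltn_modp gnz.
Qed.

Lemma Rdown nn : forall j, (j + nn = k)%N -> forall c, chain C j c ->
  exists a : 'I_k -> {poly F}, (forall t, (size (a t) < size f)%N) /\
    c = modrow f (\sum_(t < k | (j <= t)%N) a t *: r t).
Proof.
elim: nn => [|nn IH] j jn c cc.
  rewrite addn0 in jn; subst j.
  exists (fun _ => 0); split; first by move=> t; rewrite size_poly0 size_f0.
  rewrite big1 ?modrow0; first exact: (proj2 hB).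
  by move=> t _; rewrite scale0r.
have jk : (j < k)%N by lia.
pose J : 'I_k := Ordinal jk.
have [cJ minp _ _] := hL J.
have red : reduced f c by case: hC => H _ _ _; apply: H; exact: chain_sub cc.
have [P [eP gP bef]] := rowinfo J.
have pc : (p J <= lind c)%N := minp c cc.
have ce0 : forall t : 'I_l, (t < P)%N -> c ord0 t = 0.
  by apply/(lind_geP c (ltnW (ltn_ord P))); rewrite -eP.
pose e := c ord0 P.
have hdiv : g J %| e.
  apply/modp_eq0P/eqP/negP => rn.
  pose rho := e %% g J; pose q := e %/ g J; pose gam := (lead_coef rho)^-1.
  have he : e = q * g J + rho := divp_eq e (g J).
  pose w := modrow f (gam%:P *: c) + modrow f (((- (gam%:P * q)) %% f) *: r J).
  have cw : chain C J w.
    apply: chain_add; apply: chain_scale => //.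
    - by apply: leq_ltn_trans (size_polyC_leq1 _) (size_f2 J).
    - by rewrite ltn_modp fnz.
  apply: (noSmaller (J := J) (P := P) (w := w) (rho := gam%:P * rho)) => //.
  - by move=> t tP; rewrite !mxE ce0 // G_before ?eP // !mulr0 mod0p addr0.
  - rewrite !mxE -/e (G_at (i:=J) (t:=P)) ?eP // [in X in _ + X]mulrC modp_mul -modpD.
    have -> : gam%:P * e + g J * - (gam%:P * q) = gam%:P * rho.
      by rewrite he; ring.
    rewrite modp_small //.
    have s1 : (size rho < size (g J))%N by rewrite ltn_modp gnz.
    have s2 := sizeCmul gam rho.
    have s3 := size_g J.
    move: s1 s2 s3; move: (size rho) (size (gam%:P * rho)%R) (size (g J)) => x1 x2 x3 h1 h2 h3.
  exact: leq_ltn_trans h2 (ltn_trans h1 h3).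
  - by rewrite mul_polyC; apply: monic_inv; apply/negP.
  - by apply: leq_ltn_trans (sizeCmul _ _) _; rewrite ltn_modp gnz.
pose q := e %/ g J.
have eq : e = q * g J by rewrite divpK.
pose c' := c + modrow f (((- q) %% f) *: r J).
have cc' : chain C J c'.
  by apply: chain_add => //; apply: chain_scale; rewrite // ltn_modp fnz.
have hPl : (p J < l)%N := p_lt J.
have cj1 : chain C j.+1 c'.
  split; first exact: cc'.
  exists (r J); split; first exact: cJ.
  split; first exact: rnz.
  apply/(lind_geP c' hPl) => t; rewrite ltnS leq_eqVlt => /orP[/eqP et|lt].
  + have -> : t = P by apply: val_inj; rewrite /= et eP.
    rewrite !mxE -/e (G_at (i:=J) (t:=P)) ?eP // mulrC modp_mul mulrN modNp.
    by rewrite mulrC -eq modp_small ?subrr //; apply: red.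
  + by rewrite !mxE ce0 -?eP // G_before // mulr0 mod0p addr0.
have jn1 : (j.+1 + nn = k)%N by lia.
have [a [ha ec']] := IH j.+1 jn1 c' cj1.
pose a' := fun t : 'I_k => if t == J then q %% f else a t.
exists a'; split.
  by move=> t; rewrite /a'; case: eqP => _; rewrite ?ltn_modp ?fnz ?ha.
rewrite (bigD1 J) /= ?leqnn // /a' eqxx modrowD addrC.
have -> : \sum_(t < k | (j <= t)%N && (t != J)) (if t == J then q %% f else a t) *: r t
    = \sum_(t < k | (j < t)%N) a t *: r t.
  apply: eq_big => t.
    by rewrite ltn_neqAle andbC -val_eqE /= eq_sym.
  by move=> /andP[_ /negPf ->].
rewrite -ec' /c' -addrA !modrowmZ scaleNr modrowN.
by rewrite addNr addr0.
Qed.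

Lemma fwdIII i : exists a : 'I_k -> {poly F},
        (forall j, (size (a j) < size f)%N) /\
        modrow f ((f %/ g i) *: r i) =
        modrow f (\sum_(j < k | (i < j)%N) a j *: row j G).
Proof.
have [ci _ _ _] := hL i.
have [J [eJ gJ bef]] := rowinfo i.
pose h := f %/ g i.
pose w := modrow f ((h %% f) *: r i).
have cw : chain C i w by apply: chain_scale; rewrite // ltn_modp fnz.
have hPl : (p i < l)%N := p_lt i.
have cw1 : chain C i.+1 w.
  split; first exact: cw.
  exists (r i); split; first exact: ci.
  split; first exact: rnz.
  apply/(lind_geP w hPl) => t; rewrite ltnS leq_eqVlt => /orP[/eqP et|lt].
  + rewrite !mxE mulrC modp_mul (G_at (i:=i) (t:=t)) // mulrC divpK ?modpp //.
    exact: fwdII.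
  + by rewrite !mxE G_before // mulr0 mod0p.
have ik : (i.+1 + (k - i.+1) = k)%N by have := ltn_ord i; lia.
have [a [ha ew]] := Rdown ik cw1.
exists a; split => //.
by rewrite -modrowmZ -/w ew.
Qed.

End Fwd.

End Main.

Theorem mainTheorem1 (F : finFieldType) (f : {poly F}) (l k : nat)
  (C : vec F l -> Prop) (G : 'M[{poly F}]_(k, l)) :
  f \is monic ->
  isACode f C ->
  isGenMatrix f G C ->
  (forall i : 'I_k, monicv (row i G)) ->
  let m := (size f).-1 in
  let condI := forall i j : 'I_k, (i < j)%N -> (lind (row i G) < lind (row j G))%N in
  let condII := forall i : 'I_k, lcoef (row i G) %| f in
  let condIII := forall i : 'I_k,
      exists a : 'I_k -> {poly F},
        (forall j, (size (a j) < size f)%N) /\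
        modrow f ((f %/ lcoef (row i G)) *: row i G) =
        modrow f (\sum_(j < k | (i < j)%N) a j *: row j G) in
  let condIII' := dimF C (\sum_(i < k) (m - (size (lcoef (row i G))).-1))%N in
  (basisOfDivisors C (fun i : 'I_k => row i G) <-> [/\ condI, condII & condIII]) /\
  (basisOfDivisors C (fun i : 'I_k => row i G) <-> [/\ condI, condII & condIII']).
Proof.
move=> fmon hC hG rmon m cI cII cIII cIII'.
split; split.
- move=> hB; split.
  + exact: (fwdI hB).
  + exact: (fwdII fmon hC hG rmon hB).
  + exact: (fwdIII fmon hC hG rmon hB).
- case=> h1 h2 h3.
  apply: (basis_of fmon hG rmon h1).
  exact: (rep3 fmon hG rmon h2 h3).
- move=> hB; split.
  + exact: (fwdI hB).
  + exact: (fwdII fmon hC hG rmon hB).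
  + apply: (dim_of fmon hC hG rmon (fwdI hB)).
    apply: (rep3 fmon hG rmon (fwdII fmon hC hG rmon hB)).
    exact: (fwdIII fmon hC hG rmon hB).
- case=> h1 h2 h3.
  apply: (basis_of fmon hG rmon h1).
  exact: (rep_dim fmon hG rmon h1 h3).
Qed.
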